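(* Let $n\in\mathbb{N}$, let $\mathbf{s}=(s_0,\ldots,s_n)\subset[0,\infty)$ be strictly positive on $(0,\infty)$ and let $s_{-1}\in[0,\infty)$. Then the sequence $\mathbf{s}'=(s_{-1},s_0,\ldots,s_n)$ (viewed as a sequence of length $n+2$ with $s_{-1}$ as its zeroth term) is strictly positive on $(0,\infty)$ if and only if $s_{-1}\in(t_\infty(\mathbf{s}),\infty)$.
   Context: For $a<b$ and $\mathbf{s}=(s_0,\ldots,s_n)$ let $\sigma(x^k)=s_k$ define a linear functional on real polynomials of degree $\le n$. $\mathbf{s}$ is positive on $[a,b]$ if $\sigma(P)\ge0$ for every such $P$ nonnegative on $[a,b]$, strictly positive if moreover $\sigma(P)>0$ for every such $P\not\equiv0$. Strictly positive on $(0,\infty)$ means strictly positive on some $[a,b]\subset(0,\infty)$. $\mathcal{M}_{a,b}(\mathbf{s})$ is the set of positive Borel measures on $[a,b]$ with $k$-th moments $s_k$ ($k=0,\ldots,n$); $t_{a,b}(\mathbf{s})=\inf\{\int_{[a,b]}\frac1t\,d\mu:\mu\in\mathcal{M}_{a,b}(\mathbf{s})\}$ with $\inf\varnothing=\infty$, and $t_\infty(\mathbf{s})=\inf_{0<a<b}t_{a,b}(\mathbf{s})$. *)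

(* Defs.v *)
From HB Require Import structures.
From mathcomp Require Import all_boot all_order all_algebra.
From mathcomp Require Import all_classical all_reals all_analysis.
Set Implicit Arguments. Unset Strict Implicit. Unset Printing Implicit Defensive.
Import Order.TTheory GRing.Theory Num.Theory.
Local Open Scope classical_set_scope.
Local Open Scope ring_scope.

Section Defs.
Variable R : realType.

Definition sigma (s : nat -> R) (P : {poly R}) : R :=
  \sum_(k < size P) P`_k * s k.

Definition nonneg_on (P : {poly R}) (a b : R) : Prop :=
  forall x, a <= x <= b -> 0 <= P.[x].

Definition positive_on (n : nat) (s : nat -> R) (a b : R) : Prop :=
  forall P : {poly R}, (size P <= n.+1)%N -> nonneg_on P a b -> 0 <= sigma s P.

Definition strictly_positive_on (n : nat) (s : nat -> R) (a b : R) : Prop :=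
  positive_on n s a b /\
  forall P : {poly R}, (size P <= n.+1)%N -> P != 0 -> nonneg_on P a b ->
    0 < sigma s P.

(* strictly positive on (0, oo): strictly positive on some [a,b], 0 < a < b *)
Definition strictly_positive_pos (n : nat) (s : nat -> R) : Prop :=
  exists a b : R, 0 < a /\ a < b /\ strictly_positive_on n s a b.

(* M_{a,b}(s): positive Borel measures on [a,b] (represented as Borel measures
   on R concentrated on [a,b]) whose k-th moments are s_k, k = 0..n. *)
Definition moment_measures (n : nat) (s : nat -> R) (a b : R)
  : set {measure set R -> \bar R} :=
  [set mu | mu (~` `[a, b]) = 0%E /\
     forall k, (k <= n)%N ->
       (\int[mu]_(x in `[a, b]) (x ^+ k)%:E = (s k)%:E)%E].

(* t_{a,b}(s) = inf { int 1/t dmu : mu in M_{a,b}(s) }, inf of empty = +oo *)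
Definition t_ab (n : nat) (s : nat -> R) (a b : R) : \bar R :=
  ereal_inf [set (\int[mu]_(x in `[a, b]) (x^-1)%:E)%E
            | mu in moment_measures n s a b].

Definition t_inf (n : nat) (s : nat -> R) : \bar R :=
  ereal_inf [set t_ab n s ab.1 ab.2 | ab in [set ab : R * R | 0 < ab.1 /\ ab.1 < ab.2]].

Definition prepend (sm1 : R) (s : nat -> R) : nat -> R :=
  fun k => if k is k'.+1 then s k' else sm1.

End Defs.

(* Main.v *)
Require Import Defs.
From HB Require Import structures.
From mathcomp Require Import all_boot all_order all_algebra.
From mathcomp Require Import all_classical all_reals all_analysis.
From mathcomp Require Import measurable_realfun.
From mathcomp Require Import ring lra finmap.
Set Implicit Arguments. Unset Strict Implicit. Unset Printing Implicit Defensive.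
Import Order.TTheory GRing.Theory Num.Theory.
Import numFieldNormedType.Exports.
Local Open Scope classical_set_scope.
Local Open Scope ring_scope.

Section Farkas.
Variable R : realType.
Definition dot N (y g : 'rV[R]_N) : R := \sum_(k < N) y 0 k * g 0 k.

Lemma dotDr N (y g h : 'rV[R]_N) : dot y (g + h) = dot y g + dot y h.
Proof. by rewrite /dot -big_split; apply: eq_bigr => k _; rewrite mxE mulrDr. Qed.
Lemma dotDl N (y g h : 'rV[R]_N) : dot (g + h) y = dot g y + dot h y.
Proof. by rewrite /dot -big_split; apply: eq_bigr => k _; rewrite mxE mulrDl. Qed.
Lemma dotZr N a (y g : 'rV[R]_N) : dot y (a *: g) = a * dot y g.
Proof. by rewrite /dot mulr_sumr; apply: eq_bigr => k _; rewrite mxE mulrCA. Qed.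
Lemma dotZl N a (y g : 'rV[R]_N) : dot (a *: g) y = a * dot g y.
Proof. by rewrite /dot mulr_sumr; apply: eq_bigr => k _; rewrite mxE mulrA. Qed.
Lemma dotNr N (y g : 'rV[R]_N) : dot y (- g) = - dot y g.
Proof. by rewrite -scaleN1r dotZr mulN1r. Qed.
Lemma dotNl N (y g : 'rV[R]_N) : dot (- g) y = - dot g y.
Proof. by rewrite -scaleN1r dotZl mulN1r. Qed.
Lemma dotBr N (y g h : 'rV[R]_N) : dot y (g - h) = dot y g - dot y h.
Proof. by rewrite dotDr dotNr. Qed.
Lemma dotBl N (y g h : 'rV[R]_N) : dot (g - h) y = dot g y - dot h y.
Proof. by rewrite dotDl dotNl. Qed.
Lemma dot0r N (y : 'rV[R]_N) : dot y 0 = 0.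
Proof. by rewrite /dot big1 // => k _; rewrite mxE mulr0. Qed.
Lemma dot_sumr N r (y : 'rV[R]_N) (F : nat -> 'rV[R]_N) :
  dot y (\sum_(i < r) F i) = \sum_(i < r) dot y (F i).
Proof.
elim: r => [|r IH]; first by rewrite !big_ord0 dot0r.
by rewrite !big_ord_recr /= dotDr IH.
Qed.

Lemma dot_self_gt0 N (v : 'rV[R]_N) : v != 0 -> 0 < dot v v.
Proof.
move=> v0; rewrite lt_def; apply/andP; split; last first.
  by apply: sumr_ge0 => k _; rewrite -expr2 sqr_ge0.
apply: contra v0 => /eqP /psumr_eq0P H; apply/eqP/rowP => k.
have := H (fun i _ => ltac:(rewrite -expr2; exact: sqr_ge0)) k isT; rewrite -expr2 => /eqP.
by rewrite sqrf_eq0 mxE => /eqP.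
Qed.

Lemma farkas_r N r : forall (gs : seq 'rV[R]_N), size gs = r -> forall v : 'rV[R]_N,
  (exists f : nat -> R, (forall i, 0 <= f i) /\ v = \sum_(i < size gs) f i *: gs`_i)
  \/ (exists y, (forall i, (i < size gs)%N -> 0 <= dot y gs`_i) /\ dot y v < 0).
Proof.
elim: r => [|r IH] gs.
  move/size0nil => -> v /=.
  have [->|v0] := eqVneq v 0.
    by left; exists (fun=> 0); split => //; rewrite big_ord0.
  right; exists (- v); split => // .
  by rewrite dotNl oppr_lt0 dot_self_gt0.
case: gs => [//|g gs] [sz] v.
have [[f [f0 ->]]|[y [yge yv]]] := IH gs sz v.
  left; exists (fun i => if i is i'.+1 then f i' else 0); split.
    by case.
  by rewrite /= big_ord_recl /= scale0r add0r.
have [yg0|ygn] := leP 0 (dot y g).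
  right; exists y; split => // -[|i] //= Hi; exact: yge.
pose proj h := h - (dot y h / dot y g) *: g.
have ygne : dot y g != 0 by rewrite lt_eqF.
have [|[f [f0 Hv]]|[y' [y'ge y'v]]] := IH (map proj gs) _ (proj v).
- by rewrite size_map.
- left; pose lam := (dot y v - \sum_(i < size gs) f i * dot y gs`_i) / dot y g.
  exists (fun i => if i is i'.+1 then f i' else lam); split.
    case => [|i] //; rewrite /lam.
    rewrite -mulrNN -invrN; apply: mulr_ge0; last by rewrite invr_ge0 oppr_ge0 ltW.
    rewrite oppr_ge0 ltW // ltrBlDr; apply: (lt_le_trans yv).
    rewrite add0r; apply: sumr_ge0 => i _; apply: mulr_ge0 => //; exact: yge.
  rewrite /= big_ord_recl /=.
  have E : \sum_(i < size (map proj gs)) f i *: (map proj gs)`_i =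
     \sum_(i < size gs) f i *: gs`_i -
     (\sum_(i < size gs) f i * (dot y gs`_i / dot y g)) *: g.
    rewrite size_map scaler_suml -sumrB; apply: eq_bigr => i _.
    rewrite (nth_map 0) // /proj scalerBr scalerA //.
  move: Hv; rewrite E /proj => /eqP; rewrite subr_eq => /eqP ->.
  rewrite /lam -addrA addrC; congr (_ + _).
  rewrite -scaleNr -scalerDl; congr (_ *: _).
  rewrite mulrBl addrC; congr (_ - _); rewrite mulr_suml.
  by apply: eq_bigr => i _; rewrite mulrA.
- right; pose z := y' - (dot y' g / dot y g) *: y.
  have Hz h : dot z h = dot y' (proj h).
    rewrite /z /proj dotBl dotBr dotZl dotZr; congr (_ - _).
    by rewrite mulrC mulrA mulrAC.
  exists z; split; last by rewrite Hz.
  case => [|i] /= Hi.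
    by rewrite Hz /proj divff // scale1r subrr dot0r.
  rewrite Hz; have := y'ge i; rewrite size_map (nth_map 0) //; exact.
Qed.
Lemma dot_continuous N (w : 'rV[R]_N) : continuous (fun c : 'rV[R]_N => dot c w).
Proof.
rewrite /dot => c.
elim: (index_enum _) => [|k r IH].
  under eq_fun do rewrite big_nil; exact: cst_continuous.
under eq_fun do rewrite big_cons.
have h1 : {for c, continuous (fun x : 'rV[R]_N => x 0 k * w 0 k)}.
  apply: continuousZr_tmp; exact: coord_continuous.
exact: (continuousD h1 IH).
Qed.

Lemma coord_le_norm N (c : 'rV[R]_N) k : `|c 0 k| <= `|c|.
Proof.
have /mapP[j Hj ->] : `|c 0 k| \in [seq `|c x.1 x.2| | x : 'I_1 * 'I_N].
  by apply/mapP; exists (ord0, k) => //=; rewrite mem_enum.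
by rewrite [leRHS]/Num.norm /= mx_normrE; apply/bigmax_geP; right => /=; exists j.
Qed.

Lemma normalize_norm N (c : 'rV[R]_N) : c != 0 -> `| `|c|^-1 *: c | = 1.
Proof.
move=> c0; rewrite normrZ ger0_norm ?invr_ge0 // mulVf // normr_eq0 //.
Qed.

Lemma sphere_compact N : compact [set c : 'rV[R]_N | `|c| = 1].
Proof.
apply: bounded_closed_compact.
  exists 1; split => // M M1 x /= ->; exact: ltW.
have := @norm_continuous _ 'rV[R]_N.
move/continuous_closedP => /(_ [set 1]); apply; exact: closed_eq.
Qed.

Lemma fin_sub N (I : choiceType) (D : set I) (g : I -> set 'rV[R]_N.+1) :
  (forall i, D i -> closed (g i)) ->
  ~ (exists c, `|c| = 1 /\ forall i, D i -> g i c) ->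
  exists D' : {fset I}, {subset D' <= D} /\
    ~ (exists c, `|c| = 1 /\ forall i, i \in D' -> g i c).
Proof.
move=> gcl H; apply: contrapT => H'.
have c1 : exists c : 'rV[R]_N.+1, `|c| = 1.
  exists (`|const_mx 1 : 'rV[R]_N.+1|^-1 *: const_mx 1); apply: normalize_norm.
  apply/eqP => /rowP /(_ ord0); rewrite !mxE; apply/eqP; exact: oner_neq0.
case: (pselect (exists i, D i)) => [[i0 Di0]|nD]; last first.
  apply: H; case: c1 => c cn; exists c; split => // i Di; exfalso; apply: nD; by exists i.
have hc := @sphere_compact N.+1; rewrite compact_In0 in hc.
have := hc I D (fun i => [set c | `|c| = 1] `&` g i).
case.
- exists g => //.
- move=> D' sD'; apply: contrapT => nE; apply: H'; exists D'; split => //.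
  move=> [c [cn cg]]; apply: nE; exists c => i /= iD'; split => //; exact: cg.
- move=> c Hc; apply: H; exists c; split; first by case: (Hc i0 Di0).
  by move=> i Di; case: (Hc i Di).
Qed.
End Farkas.

Section Transl.
Variable R : realType.

Lemma farkas N (gs : seq 'rV[R]_N) (v : 'rV[R]_N) :
  (exists f : nat -> R, (forall i, 0 <= f i) /\ v = \sum_(i < size gs) f i *: gs`_i)
  \/ (exists y, (forall i, (i < size gs)%N -> 0 <= dot y gs`_i) /\ dot y v < 0).
Proof. exact: (@farkas_r R N (size gs) gs erefl v). Qed.

Lemma closed_le_fun N (f h : 'rV[R]_N -> R) : continuous f -> continuous h ->
  closed [set c | f c <= h c].
Proof.
move=> cf ch.
have -> : [set c | f c <= h c] = (fun c => f c - h c) @^-1` [set x : R | x <= 0].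
  by apply/seteqP; split => c /=; rewrite subr_le0.
have : continuous (fun c => f c - h c) by move=> c; exact: (continuousB (cf c) (ch c)).
by move/continuous_closedP; apply; exact: closed_le.
Qed.

Definition gam N (x : R) : 'rV[R]_N := \row_(k < N) x ^+ k.
Definition urow N (u : nat -> R) : 'rV[R]_N := \row_(k < N) u k.
Definition rowp N (P : {poly R}) : 'rV[R]_N := \row_(k < N) P`_k.
Definition polr m (c : 'rV[R]_m.+1) : {poly R} := \poly_(k < m.+1) c 0 (inord k).

Lemma sum_widen (n m : nat) (F : nat -> R) : (n <= m)%N ->
  (forall k, (n <= k)%N -> F k = 0) -> \sum_(k < m) F k = \sum_(k < n) F k.
Proof.
move=> nm H; rewrite [RHS](big_ord_widen m F nm) [RHS]big_mkcond /=.
apply: eq_bigr => k _; case: ifP => // /negbT; rewrite -leqNgt => /H ->//.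
Qed.

Lemma horner_rowp N (P : {poly R}) (x : R) : (size P <= N)%N -> P.[x] = dot (rowp N P) (gam N x).
Proof. by move=> sP; rewrite (horner_coef_wide x sP) /dot; apply: eq_bigr => k _; rewrite !mxE. Qed.

Lemma sigma_rowp N (u : nat -> R) (P : {poly R}) : (size P <= N)%N -> sigma u P = dot (rowp N P) (urow N u).
Proof.
move=> sP; rewrite /sigma /dot -(sum_widen (F := fun k => P`_k * u k) sP).
  by apply: eq_bigr => k _; rewrite !mxE.
by move=> k sk; rewrite nth_default // mul0r.
Qed.

Lemma rowp_polr m (c : 'rV[R]_m.+1) : rowp m.+1 (polr c) = c.
Proof.
apply/rowP => k; rewrite !mxE coef_poly ltn_ord; congr (c 0 _).
by apply: val_inj; rewrite /= inordK.
Qed.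

Lemma size_polr m (c : 'rV[R]_m.+1) : (size (polr c) <= m.+1)%N.
Proof. exact: size_poly. Qed.

Lemma horner_polr m (c : 'rV[R]_m.+1) x : (polr c).[x] = dot c (gam m.+1 x).
Proof. by rewrite (horner_rowp x (size_polr c)) rowp_polr. Qed.

Lemma sigma_polr m (c : 'rV[R]_m.+1) (u : nat -> R) : sigma u (polr c) = dot c (urow m.+1 u).
Proof. by rewrite (sigma_rowp u (size_polr c)) rowp_polr. Qed.

Lemma polr_neq0 m (c : 'rV[R]_m.+1) : c != 0 -> polr c != 0.
Proof.
apply: contra => /eqP P0; rewrite -(rowp_polr c) P0; apply/eqP/rowP => k.
by rewrite !mxE coef0.
Qed.

Lemma rowp_neq0 N (P : {poly R}) : (size P <= N)%N -> P != 0 -> rowp N P != 0.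
Proof.
move=> sP; apply: contra => /eqP P0; apply/eqP/polyP => k; rewrite coef0.
case: (ltnP k N) => kN; last by rewrite nth_default // (leq_trans sP kN).
by have := congr1 (fun M : 'rV[R]_N => M 0 (Ordinal kN)) P0; rewrite !mxE.
Qed.

Lemma norm1_neq0 N (c : 'rV[R]_N) : `|c| = 1 -> c != 0.
Proof. by move=> cn; apply/eqP => c0; move: cn; rewrite c0 normr0 => /eqP; rewrite eq_sym oner_eq0. Qed.

Definition getl (i : (R + nat)%type) := if i is inl x then Some x else None.
Definition getr (i : (R + nat)%type) := if i is inr j then j else 0%N.

Lemma interior_rep m (u : nat -> R) a b :
  strictly_positive_on m u a b ->
  exists eps, 0 < eps /\ exists (xs : seq R) (f : nat -> R), (forall i, 0 <= f i) /\
    (forall x, x \in xs -> a <= x <= b) /\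
    forall k, (k <= m)%N ->
      u k - (if k == 0%N then eps else 0) = \sum_(i < size xs) f i * xs`_i ^+ k.
Proof.
case=> _ Hsp.
pose I := (R + nat)%type.
pose D : set I := fun i => if i is inl x then a <= x <= b else True.
pose g : I -> set 'rV[R]_m.+1 := fun i => match i with
  | inl x => [set c | 0 <= dot c (gam m.+1 x)]
  | inr j => [set c | dot c ((j.+1)%:R *: urow m.+1 u) <= `|c 0 0|] end.
have gcl : forall i, D i -> closed (g i).
  case => [x|j] _ /=.
  - apply: (closed_le_fun (f := fun=> 0)); first exact: cst_continuous.
    exact: dot_continuous.
  - apply: closed_le_fun; first exact: dot_continuous.
    move=> c; apply: (continuous_comp (f := fun c : 'rV[R]_m.+1 => c 0 0)).
      exact: coord_continuous.
    exact: norm_continuous.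
have := @fin_sub R m I D g gcl; case.
  move=> [c [cn Hc]].
  have c0 := norm1_neq0 cn.
  have Pnn : nonneg_on (polr c) a b.
    by move=> x xab; rewrite horner_polr; exact: (Hc (inl x) xab).
  have := Hsp (polr c) (size_polr c) (polr_neq0 c0) Pnn; rewrite sigma_polr => Lpos.
  set L := dot c (urow m.+1 u) in Lpos.
  have := archi_boundP (divr_ge0 (normr_ge0 (c 0 0)) (ltW Lpos)).
  set j := Num.Def.archi_bound _ => hj.
  have := Hc (inr j) Logic.I; rewrite /= dotZr -/L => hle.
  have : `|c 0 0| < (j.+1)%:R * L.
    rewrite -ltr_pdivrMr //; apply: (lt_le_trans hj); by rewrite ler_nat.
  by rewrite ltNge hle.
move=> D' [sD' HD'].
pose xs := pmap getl D'.
pose J := \max_(i <- D') getr i.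
pose eps : R := ((J.+1)%:R)^-1.
have eps0 : 0 < eps by rewrite invr_gt0 ltr0n.
pose e0 : 'rV[R]_m.+1 := \row_(k < m.+1) (k == 0 :> nat)%:R.
have xsD x : x \in xs -> a <= x <= b.
  rewrite mem_pmap => /mapP [i iD' ixs].
  have := sD' i iD'; case: i ixs iD' => [y [<-]|//] _; move/set_mem; exact.
exists eps; split => //.
have [[f [f0 Hv]] | [y [yge yv]]] := farkas (map (gam m.+1) xs) (urow m.+1 u - eps *: e0).
  exists xs, f; split => //; split => // k km.
  have := congr1 (fun M : 'rV[R]_m.+1 => M 0 (Ordinal (km : (k < m.+1)%N))) Hv.
  rewrite /= !mxE summxE => E.
  have -> : u k - (if k == 0%N then eps else 0) = u k - eps * (k == 0%N)%:R.
    by case: (k) => [|k'] /=; rewrite ?mulr1 ?mulr0.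
  rewrite E.
  rewrite size_map; apply: eq_bigr => i _; rewrite (nth_map 0) // !mxE //.
exfalso; apply: HD'.
have y0 : y != 0 by apply: contraTneq yv => ->; rewrite /dot big1 ?ltxx // => k _; rewrite mxE mul0r.
have ny0 : 0 < `|y| by rewrite normr_gt0.
exists (`|y|^-1 *: y); split; first exact: normalize_norm.
case => [x|j] iD' /=.
  rewrite dotZl; apply: mulr_ge0; first by rewrite invr_ge0 ltW.
  have xxs : x \in xs by rewrite mem_pmap; apply/mapP; exists (inl x).
  have := yge (index x xs); rewrite size_map index_mem => /(_ xxs).
  by rewrite (nth_map 0) ?index_mem // nth_index.
have jJ : (j <= J)%N by exact: (@leq_bigmax_seq _ _ xpredT getr (inr j) iD' isT).
have Hy : dot y (urow m.+1 u) < eps * y 0 0.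
  move: yv; rewrite dotBr dotZr.
  have -> : dot y e0 = y 0 0.
    rewrite /dot big_ord_recl !mxE /= mulr1 big1 ?addr0 //.
    by move=> k _; rewrite !mxE /= mulr0.
  by rewrite subr_lt0.
rewrite dotZr dotZl mxE normrZ ger0_norm; last by rewrite invr_ge0.
set L := dot y (urow m.+1 u) in Hy *.
have [L0|L0] := leP L 0.
  rewrite mulrCA; apply: le_trans (_ : 0 <= _); last by rewrite mulr_ge0 // invr_ge0.
  rewrite pmulr_rle0 ?invr_gt0 //; by rewrite pmulr_rle0 ?ltr0n.
rewrite mulrCA ler_pM2l ?invr_gt0 //.
apply: (le_trans (y := (J.+1)%:R * L)); first by rewrite ler_pM2r // ler_nat.
rewrite -ler_pdivlMl ?ltr0n //; apply: ltW; apply: (lt_le_trans Hy).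
by rewrite ler_pM2l // real_ler_norm // num_real.
Qed.

End Transl.

Section Atomic.
Variable R : realType.

Lemma max0_ge0 (r : R) : 0 <= Num.max 0 r.
Proof. by rewrite le_max lexx. Qed.
Definition nngm (r : R) : {nonneg R} := NngNum (max0_ge0 r).

Definition amu (xs : seq R) (f : nat -> R) : {measure set R -> \bar R} :=
  msum (fun i => mscale (nngm (f i * xs`_i)) \d_(xs`_i)) (size xs).

Lemma meas_pow (a b : R) k : measurable_fun `[a, b] (fun x : R => (x ^+ k)%:E).
Proof.
apply/measurable_EFinP; apply: measurable_funTS.
by apply: continuous_measurable_fun; exact: exprn_continuous.
Qed.

Lemma meas_inv (a b : R) : 0 < a -> measurable_fun `[a, b] (fun x : R => (x^-1)%:E).
Proof.
move=> a0; apply/measurable_EFinP.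
have sub : `[a, b] `<=` `]0, +oo[.
  by move=> x /=; rewrite !in_itv /= andbT => /andP[ax _]; exact: lt_le_trans ax.
have cont : {in `]0, +oo[%classic, continuous (fun x : R => x^-1)}.
  move=> x; rewrite in_setE /= in_itv /= andbT => x0; apply: inv_continuous.
  by rewrite gt_eqF.
have oD : open (`]0, +oo[%classic : set R) by apply: interval_open.
have h := open_continuous_measurable_fun oD cont.
exact: (measurable_funS (measurable_itv _) sub h).
Qed.

Lemma amu_int (a b : R) (xs : seq R) (f : nat -> R) (h : R -> \bar R) :
  0 < a -> (forall i, 0 <= f i) -> (forall x, x \in xs -> a <= x <= b) ->
  measurable_fun `[a, b] h -> (forall x, `[a, b]%classic x -> (0 <= h x)%E) ->
  (\int[amu xs f]_(x in `[a, b]) h x =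
    \sum_(i < size xs) ((f i * xs`_i)%:E * h xs`_i))%E.
Proof.
move=> a0 f0 xsab mh h0.
rewrite ge0_integral_measure_sum //; apply: eq_bigr => i _.
rewrite ge0_integral_mscale //.
have xi : `[a, b]%classic xs`_i.
  by rewrite /= in_itv /=; apply: xsab; rewrite mem_nth.
rewrite integral_dirac // diracE mem_set // mul1e /=.
rewrite max_r //; apply: mulr_ge0 => //.
by have /andP[+ _] := xsab _ (mem_nth 0 (ltn_ord i)); apply: le_trans; exact: ltW.
Qed.

End Atomic.

Section Forward.
Variable R : realType.

Lemma forward (n : nat) (s : nat -> R) (sm1 : R) :
  strictly_positive_pos n.+1 (prepend sm1 s) -> (t_inf n s < sm1%:E)%E.
Proof.
case=> a [b [a0 [ab Hsp]]].
have [eps [eps0 [xs [f [f0 [xsab Hk]]]]]] := interior_rep Hsp.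
have xpos x : `[a, b]%classic x -> 0 < x.
  by rewrite /= in_itv /= => /andP[ax _]; exact: lt_le_trans ax.
have xspos i : (i < size xs)%N -> 0 < xs`_i.
  move=> isz; apply: xpos; rewrite /= in_itv /=; apply: xsab; exact: mem_nth.
pose mu := amu xs f.
have Hmu : moment_measures n s a b mu.
  split.
    rewrite /mu /amu /= /msum big1 // => i _.
    change (((nngm (f i * xs`_i))%:num)%:E * \d_(xs`_i) (~` `[a, b]) = 0)%E.
    rewrite diracE memNset ?mule0 //= => /(_ (xsab _ (mem_nth 0 (ltn_ord i)))).
    by [].
  move=> k kn.
  rewrite amu_int //; last 2 first.
  - exact: meas_pow.
  - by move=> x /xpos x0; rewrite lee_fin exprn_ge0 // ltW.
  rewrite (eq_bigr (fun i : 'I_(size xs) => (f i * xs`_i ^+ k.+1)%:E)); last first.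
    by move=> i _; rewrite -EFinM exprS mulrA.
  rewrite sumEFin; congr (_%:E).
  by rewrite -Hk //= subr0.
have Hint : (\int[mu]_(x in `[a, b]) (x^-1)%:E = (sm1 - eps)%:E)%E.
  rewrite amu_int //; last 2 first.
  - exact: meas_inv.
  - by move=> x /xpos x0; rewrite lee_fin invr_ge0 ltW.
  rewrite (eq_bigr (fun i : 'I_(size xs) => (f i * xs`_i ^+ 0)%:E)); last first.
    move=> i _; have xi0 : xs`_i != 0 by rewrite gt_eqF // xspos.
    by rewrite -EFinM expr0 mulr1 -mulrA divff // mulr1.
  by rewrite sumEFin -Hk.
apply: (@le_lt_trans _ _ (sm1 - eps)%:E).
  apply: (@le_trans _ _ (t_ab n s a b)).
    by apply: ereal_inf_lbound; exists (a, b).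
  rewrite -Hint; apply: ereal_inf_lbound; by exists mu.
by rewrite lte_fin ltrBlDr ltrDl.
Qed.
End Forward.

Section Integrals.
Variable R : realType.
Variable mu : {measure set R -> \bar R}.
Variables (a b : R).
Hypothesis a0 : 0 < a.

Lemma itv_pos x : `[a, b]%classic x -> 0 < x.
Proof. by rewrite /= in_itv /= => /andP[ax _]; exact: lt_le_trans ax. Qed.

Lemma meas_scale (c : R) (h : R -> R) :
  measurable_fun `[a, b] (fun x => (h x)%:E) ->
  measurable_fun `[a, b] (fun x => (c * h x)%:E).
Proof.
move/measurable_EFinP => mh; apply/measurable_EFinP.
exact: (measurable_funM (measurable_cst c) mh).
Qed.

Lemma meas_poly M (al : nat -> R) :
  measurable_fun `[a, b] (fun x : R => (\sum_(k < M) al k * x ^+ k)%:E).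
Proof.
have -> : (fun x : R => (\sum_(k < M) al k * x ^+ k)%:E) =
          (fun x => ((\poly_(k < M) al k).[x])%:E).
  by apply/funext => x; rewrite horner_poly.
apply/measurable_EFinP; apply: measurable_funTS.
apply: continuous_measurable_fun; exact: continuous_horner.
Qed.

Lemma int_comb (s : nat -> R) n :
  (forall k, (k <= n)%N -> (\int[mu]_(x in `[a, b]) (x ^+ k)%:E = (s k)%:E)%E) ->
  forall M (al : nat -> R), (M <= n.+1)%N -> (forall k, 0 <= al k) ->
  (\int[mu]_(x in `[a, b]) (\sum_(k < M) al k * x ^+ k)%:E =
    (\sum_(k < M) al k * s k)%:E)%E.
Proof.
move=> Hm; elim => [|M IH] al Mn al0.
  under eq_integral do rewrite big_ord0.
  by rewrite big_ord0 integral0.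
under eq_integral do rewrite big_ord_recr /= EFinD.
rewrite ge0_integralD //; last 4 first.
- move=> x /itv_pos x0; rewrite lee_fin; apply: sumr_ge0 => k _.
  by apply: mulr_ge0 => //; rewrite exprn_ge0 // ltW.
- exact: meas_poly.
- by move=> x /itv_pos x0; rewrite lee_fin mulr_ge0 // exprn_ge0 // ltW.
- exact: (meas_scale (al M) (meas_pow (a:=a) (b:=b) M)).
rewrite IH ?(ltnW Mn) //.
under eq_integral do rewrite EFinM.
rewrite ge0_integralZl_EFin //; last 2 first.
- by move=> x /itv_pos x0; rewrite lee_fin exprn_ge0 // ltW.
- exact: meas_pow.
by rewrite Hm // big_ord_recr /= EFinD EFinM.
Qed.

Lemma key_ineq (s : nat -> R) n (t c0 : R) (d : nat -> R) :
  (forall k, (k <= n)%N -> (\int[mu]_(x in `[a, b]) (x ^+ k)%:E = (s k)%:E)%E) ->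
  (\int[mu]_(x in `[a, b]) (x^-1)%:E = t%:E)%E ->
  0 <= c0 ->
  (forall x, a <= x <= b -> 0 <= \sum_(k < n.+1) d k * x ^+ k + c0 * x^-1) ->
  0 <= \sum_(k < n.+1) d k * s k + c0 * t.
Proof.
move=> Hm Ht c00 Hx.
pose dp k := Num.max (d k) 0.
pose dm k := Num.max (- d k) 0.
have dE k : d k = dp k - dm k.
  rewrite /dp /dm /=; case: (leP 0 (d k)) => dk.
    by rewrite max_r ?subr0 // oppr_le0.
  rewrite max_l; first by rewrite sub0r opprK.
  by rewrite oppr_ge0 ltW.
have dp0 k : 0 <= dp k by rewrite le_max lexx orbT.
have dm0 k : 0 <= dm k by rewrite le_max lexx orbT.
have mi : measurable_fun `[a, b] (fun x : R => (c0 * x^-1)%:E).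
  exact: (meas_scale c0 (meas_inv (b:=b) a0)).
have le : (\int[mu]_(x in `[a, b]) (\sum_(k < n.+1) dm k * x ^+ k)%:E <=
           \int[mu]_(x in `[a, b]) ((\sum_(k < n.+1) dp k * x ^+ k)%:E + (c0 * x^-1)%:E))%E.
  apply: ge0_le_integral => //.
  - move=> x /itv_pos x0; rewrite lee_fin; apply: sumr_ge0 => k _.
    by apply: mulr_ge0 => //; rewrite exprn_ge0 // ltW.
  - exact: meas_poly.
  - by apply: emeasurable_funD => //; exact: meas_poly.
  - move=> x xab; rewrite -EFinD lee_fin -subr_ge0.
    have := Hx x; rewrite /= in_itv /= in xab => /(_ xab).
    congr (0 <= _); rewrite addrAC -sumrB; congr (_ + _).
    by apply: eq_bigr => k _; rewrite -mulrBl -dE.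
move: le; rewrite ge0_integralD //; last 3 first.
- move=> x /itv_pos x0; rewrite lee_fin; apply: sumr_ge0 => k _.
  by apply: mulr_ge0 => //; rewrite exprn_ge0 // ltW.
- exact: meas_poly.
- by move=> x /itv_pos x0; rewrite lee_fin mulr_ge0 // invr_ge0 ltW.
under [X in (_ <= _ + X)%E]eq_integral do rewrite EFinM.
rewrite ge0_integralZl_EFin //; last 2 first.
- by move=> x /itv_pos x0; rewrite lee_fin invr_ge0 ltW.
- exact: meas_inv.
rewrite Ht !(int_comb Hm) // -EFinM -EFinD lee_fin => le.
rewrite (eq_bigr (fun k : 'I_n.+1 => dp k * s k - dm k * s k)); last first.
  by move=> k _; rewrite dE mulrBl.
by rewrite sumrB -addrAC subr_ge0.
Qed.
End Integrals.

Section Backward.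
Variable R : realType.

Lemma dot_gam_split n (c : 'rV[R]_n.+2) x :
  dot c (gam n.+2 x) = c 0 0 + x * \sum_(k < n.+1) c 0 (inord k.+1) * x ^+ k.
Proof.
rewrite /dot big_ord_recl !mxE expr0 mulr1; congr (_ + _).
rewrite mulr_sumr; apply: eq_bigr => k _; rewrite !mxE lift0 exprS.
have -> : (inord k.+1 : 'I_n.+2) = lift ord0 k by apply: val_inj; rewrite /= inordK // ltnS.
by rewrite mulrCA.
Qed.

Lemma dot_urow_split n (c : 'rV[R]_n.+2) sm1 (s : nat -> R) :
  dot c (urow n.+2 (prepend sm1 s)) = c 0 0 * sm1 + \sum_(k < n.+1) c 0 (inord k.+1) * s k.
Proof.
rewrite /dot big_ord_recl !mxE /=; congr (_ + _).
apply: eq_bigr => k _; rewrite !mxE lift0 /=.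
have -> : (inord k.+1 : 'I_n.+2) = lift ord0 k by apply: val_inj; rewrite /= inordK // ltnS.
by [].
Qed.

Lemma small_x_neg n (c : 'rV[R]_n.+2) B : `|c| = 1 -> 0 < B -> c 0 0 < 0 ->
  exists x, 0 < x <= B /\ dot c (gam n.+2 x) < 0.
Proof.
move=> cn B0 cneg.
set del := - c 0 0.
have del0 : 0 < del by rewrite oppr_gt0.
pose x := Num.min B (Num.min 1 (del / (n.+2)%:R)).
have x0 : 0 < x by rewrite !lt_min B0 ltr01 divr_gt0 // ltr0n.
have xB : x <= B by rewrite ge_min lexx.
have x1 : x <= 1 by rewrite ge_min [X in _ || X]ge_min lexx orbT.
have xd : x <= del / (n.+2)%:R by rewrite ge_min [X in _ || X]ge_min lexx !orbT.
exists x; split; first by rewrite x0 xB.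
rewrite dot_gam_split.
have HS : \sum_(k < n.+1) c 0 (inord k.+1) * x ^+ k <= (n.+1)%:R.
  apply: (@le_trans _ _ (\sum_(k < n.+1) (1 : R))); last by rewrite sumr_const card_ord.
  apply: ler_sum => k _.
  apply: (le_trans (ler_norm _)); rewrite normrM -[1]mulr1; apply: ler_pM => //.
    by rewrite -cn coord_le_norm.
  rewrite ger0_norm; [exact: exprn_ile1 (ltW x0) x1 | exact: exprn_ge0 (ltW x0)].
have : x * \sum_(k < n.+1) c 0 (inord k.+1) * x ^+ k < del.
  apply: (le_lt_trans (ler_wpM2l (ltW x0) HS)).
  apply: (le_lt_trans (ler_wpM2r (ler0n _ _) xd)).
  rewrite -mulrA gtr_pMr // mulrC ltr_pdivrMr ?ltr0n // mul1r ltr_nat //.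
by rewrite /del => h; rewrite -subr_lt0 in h; rewrite addrC; move: h; rewrite opprK.
Qed.

Lemma foldr_min_prop (m0 : R) (xs : seq R) :
  foldr Num.min m0 xs <= m0 /\ forall x, x \in xs -> foldr Num.min m0 xs <= x.
Proof.
elim: xs => [|y xs [IH1 IH2]] /=; first by split.
split; first by rewrite ge_min IH1 orbT.
move=> x; rewrite inE => /orP [/eqP ->|xin]; first by rewrite ge_min lexx.
by rewrite ge_min IH2 ?orbT.
Qed.

Lemma foldr_min_gt0 (m0 : R) (xs : seq R) : 0 < m0 -> (forall x, x \in xs -> 0 < x) ->
  0 < foldr Num.min m0 xs.
Proof.
move=> m00; elim: xs => [|y xs IH] H /=; first by [].
rewrite lt_min; apply/andP; split; first by apply: H; rewrite inE eqxx.
by apply: IH => x xin; apply: H; rewrite inE xin orbT.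
Qed.

End Backward.

Section Backward2.
Variable R : realType.

Lemma backward n (s : nat -> R) (sm1 : R) :
  strictly_positive_pos n s -> (t_inf n s < sm1%:E)%E ->
  strictly_positive_pos n.+1 (prepend sm1 s).
Proof.
move=> [a0 [b0 [a00 [ab0 [_ Hs]]]]].
move=> /ereal_inf_lt [y [[a b] /= [a0' ab'] <-]].
move=> /ereal_inf_lt [T [mu [mu0 Hmom] <-]] HT.
have T0 : (0 <= \int[mu]_(x in `[a, b]) (x^-1)%:E)%E.
  by apply: integral_ge0 => x /(itv_pos a0') x0; rewrite lee_fin invr_ge0 ltW.
have Tfin : (\int[mu]_(x in `[a, b]) (x^-1)%:E)%E \is a fin_num.
  by rewrite ge0_fin_numE // (lt_trans HT) // ltry.
set t := fine (\int[mu]_(x in `[a, b]) (x^-1)%:E)%E.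
have Ht : (\int[mu]_(x in `[a, b]) (x^-1)%:E = t%:E)%E by rewrite fineK.
have tsm : t < sm1 by rewrite -lte_fin -Ht.
pose B := Num.max b b0.
have B0 : 0 < B by rewrite lt_max (lt_trans a0' ab').
have bB : b <= B by rewrite le_max lexx.
have b0B : b0 <= B by rewrite le_max lexx orbT.
pose s' := prepend sm1 s.
have K : forall c : 'rV[R]_n.+2, `|c| = 1 ->
    (forall x, 0 < x <= B -> 0 <= dot c (gam n.+2 x)) -> 0 < dot c (urow n.+2 s').
  move=> c cn Hc.
  have c00 : 0 <= c 0 0.
    rewrite leNgt; apply/negP => cneg.
    have [x [xB xneg]] := small_x_neg cn B0 cneg.
    by have := Hc x xB; rewrite leNgt xneg.
  pose d k := c 0 (inord k.+1).
  rewrite dot_urow_split -/(d _).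
  have [c0|c0] := eqVneq (c 0 0) 0.
    pose dd : 'rV[R]_n.+1 := \row_(k < n.+1) d k.
    have dd0 : dd != 0.
      apply: contraTneq (norm1_neq0 cn) => dd0; apply/negPn/eqP/rowP => k; rewrite mxE.
      case: (unliftP ord0 k) => [j ->|->]; last by rewrite c0.
      have := congr1 (fun M : 'rV[R]_n.+1 => M 0 j) dd0; rewrite !mxE /d.
      by have -> : (inord j.+1 : 'I_n.+2) = lift ord0 j by apply: val_inj; rewrite /= inordK // ltnS.
    have Pnn : nonneg_on (polr dd) a0 b0.
      move=> x /andP [ax xb]; rewrite horner_polr.
      have x0 : 0 < x by exact: lt_le_trans ax.
      have := Hc x; rewrite x0 (le_trans xb b0B) => /(_ isT).
      rewrite dot_gam_split c0 add0r pmulr_rge0 //.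
      move=> h; rewrite /dot; under eq_bigr do rewrite !mxE; exact: h.
    have := Hs (polr dd) (size_polr dd) (polr_neq0 dd0) Pnn.
    rewrite sigma_polr /dot c0 mul0r add0r.
    by under eq_bigr do rewrite !mxE.
  have c0p : 0 < c 0 0 by rewrite lt_def c0 c00.
  have := key_ineq a0' Hmom Ht c00 (d := d).
  have Hx : forall x, a <= x <= b -> 0 <= \sum_(k < n.+1) d k * x ^+ k + c 0 0 * x^-1.
    move=> x /andP [ax xb].
    have x0 : 0 < x by exact: lt_le_trans ax.
    have := Hc x; rewrite x0 (le_trans xb bB) => /(_ isT).
    rewrite dot_gam_split => h.
    have -> : \sum_(k < n.+1) d k * x ^+ k + c 0 0 * x^-1 =
              (c 0 0 + x * \sum_(k < n.+1) d k * x ^+ k) / x.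
      by rewrite mulrDl mulrAC divff ?gt_eqF // mul1r addrC mulrC.
    by rewrite divr_ge0 // ltW.
  move=> /(_ Hx) h.
  have : c 0 0 * (sm1 - t) > 0 by rewrite mulr_gt0 // subr_gt0.
  rewrite mulrBr => h2.
  have := ltr_leD h2 h; rewrite add0r.
  by rewrite addrCA subrK addrC.
pose I := option R.
pose D : set I := fun i => if i is Some x then 0 < x <= B else True.
pose g : I -> set 'rV[R]_n.+2 := fun i => match i with
  | Some x => [set c | 0 <= dot c (gam n.+2 x)]
  | None => [set c | dot c (urow n.+2 s') <= 0] end.
have gcl : forall i, D i -> closed (g i).
  case => [x|] _ /=.
  - apply: (closed_le_fun (f := fun=> 0)); first exact: cst_continuous.
    exact: dot_continuous.
  - apply: closed_le_fun; first exact: dot_continuous.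
    exact: cst_continuous.
have [|D' [sD' HD']] := @fin_sub R n.+1 I D g gcl.
  move=> [c [cn Hc]].
  have := K c cn (fun x xB => Hc (Some x) xB).
  by rewrite ltNge (Hc None Logic.I).
pose xs := pmap id D'.
have xsD x : x \in xs -> 0 < x <= B.
  rewrite mem_pmap => /mapP [i iD' ixs].
  have := sD' i iD'; case: i ixs iD' => [z [<-]|//] _; move/set_mem; exact.
pose a' := foldr Num.min (B / 2) xs.
have [a'B a'x] := foldr_min_prop (B / 2) xs.
have a'0 : 0 < a'.
  apply: foldr_min_gt0; first by rewrite divr_gt0.
  by move=> x /xsD /andP[].
exists a', B; split => //; split.
  apply: (le_lt_trans a'B); by rewrite ltr_pdivrMr // ltr_pMr // ltr1n.
have strict : forall P : {poly R}, (size P <= n.+2)%N -> P != 0 ->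
    nonneg_on P a' B -> 0 < sigma s' P.
  move=> P sP P0 Pnn.
  have c0 := rowp_neq0 sP P0.
  have nc0 : 0 < `|rowp n.+2 P| by rewrite normr_gt0.
  rewrite (sigma_rowp _ sP).
  suff : 0 < dot (`|rowp n.+2 P|^-1 *: rowp n.+2 P) (urow n.+2 s').
    by rewrite dotZl pmulr_rgt0 // invr_gt0.
  rewrite ltNge; apply/negP => hle; apply: HD'.
  exists (`|rowp n.+2 P|^-1 *: rowp n.+2 P); split; first exact: normalize_norm.
  case => [x|] iD' //=.
  rewrite dotZl; apply: mulr_ge0; first by rewrite invr_ge0 ltW.
  rewrite -horner_rowp //.
  have xxs : x \in xs by rewrite mem_pmap; apply/mapP; exists (Some x).
  apply: Pnn; have /andP [_ ->] := xsD x xxs; by rewrite a'x.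
split; last exact: strict.
move=> P sP Pnn; have [->|P0] := eqVneq P 0.
  by rewrite /sigma size_poly0 big_ord0.
exact/ltW/strict.
Qed.

End Backward2.

Theorem theorem5p4 (R : realType) (n : nat) (s : nat -> R) (sm1 : R) :
  (forall k, (k <= n)%N -> 0 <= s k) ->
  strictly_positive_pos n s ->
  0 <= sm1 ->
  (strictly_positive_pos n.+1 (prepend sm1 s) <-> (t_inf n s < sm1%:E)%E).
Proof.
move=> _ Hs _; split; first exact: forward.
exact: backward.
Qed.
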